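(* Let $e\ge1$ and let $x_0$ be any vertex of $X_{PGL_2(F)}$. The stabiliser $\hat K_{x_0}=\{g\in\hat G^{(e)}: g(x_0)=x_0\}$ acts transitively on the set of ends of $X_{PGL_2(F)}$.
   Context: Let $F$ be a non-archimedean local field with ring of integers $\mathfrak{o}$, uniformizer $\varpi$, and finite residue field of cardinality $q$. $X=X_{PGL_2(F)}$ is the Bruhat–Tits tree of $PGL_2(F)$: its vertices are homothety classes $[L]$ (under $F^\times$) of $\mathfrak{o}$-lattices $L\subset F^2$, and $[L],[L']$ are joined by an edge iff there are representatives with $\varpi L\subsetneq L'\subsetneq L$; it is a $(q+1)$-regular tree. $d$ is the path-length distance on vertices; $\mathrm{Aut}(X)$ is the group of distance-preserving bijections of the vertex set, with the topology of pointwise convergence. $GL_2(F)$ acts on lattices through its linear action on $F^2$, the centre acts trivially, and this gives an embedding $PGL_2(F)\hookrightarrow\mathrm{Aut}(X)$. For an edge $\eta=\{x_1,x_2\}$ and $e\ge1$, $B(\eta,e)=\{y: \min(d(y,x_1),d(y,x_2))\le e\}$. Define $\hat G^{(e)}=\{g\in\mathrm{Aut}(X):\ \text{for every edge }\eta\ \text{there is } g'\in PGL_2(F)\text{ with } g|_{B(\eta,e)}=g'|_{B(\eta,e)}\}$. An end is an equivalence class of infinite paths $(y_i)_{i\in\mathbb{N}}$ (distinct vertices, consecutive ones adjacent), two paths being equivalent if they agree after a shift of index from some point on; automorphisms act on ends. *)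

(* Defs.v *)
From HB Require Import structures.
From mathcomp Require Import all_boot all_order all_algebra.
Set Implicit Arguments. Unset Strict Implicit. Unset Printing Implicit Defensive.
Import Order.TTheory GRing.Theory Num.Theory.
Local Open Scope ring_scope.

Section BTTree.
Variable F : fieldType.
(* normalized discrete valuation; its value at 0 is irrelevant (never used) *)
Variable v : F -> int.

Definition in_o (x : F) : Prop := x = 0 \/ 0 <= v x.

Definition is_discrete_valuation : Prop :=
  [/\ (forall x y, x != 0 -> y != 0 -> v (x * y) = v x + v y),
      (forall x y, x != 0 -> y != 0 -> x + y != 0 ->
          Num.min (v x) (v y) <= v (x + y)) &
      (exists p : F, p != 0 /\ v p = 1)].

Definition finite_residue_field : Prop :=
  exists s : seq F, (forall r, r \in s -> in_o r) /\
    forall x, in_o x -> exists2 r, r \in s & (x - r = 0 \/ 1 <= v (x - r)).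

Definition complete_valuation : Prop :=
  forall a : nat -> F,
    (forall N : nat, exists M : nat, forall m n, (M <= m)%N -> (M <= n)%N ->
        a m - a n = 0 \/ (N%:Z <= v (a m - a n))) ->
    exists l : F, forall N : nat, exists M : nat, forall n, (M <= n)%N ->
        a n - l = 0 \/ (N%:Z <= v (a n - l)).

Definition is_nonarch_local_field : Prop :=
  [/\ is_discrete_valuation, finite_residue_field & complete_valuation].

Definition vec := 'cV[F]_2.

Definition is_lattice (L : vec -> Prop) : Prop :=
  exists B : 'M[F]_2, B \in unitmx /\
    forall w, L w <-> exists c : vec, (forall i, in_o (c i 0)) /\ w = B *m c.

Definition scale_lat (c : F) (L : vec -> Prop) : vec -> Prop :=
  fun w => exists w0, L w0 /\ w = c *: w0.

Definition homothetic (L L' : vec -> Prop) : Prop :=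
  exists c : F, c != 0 /\ forall w, L' w <-> scale_lat c L w.

Definition is_vertex (C : (vec -> Prop) -> Prop) : Prop :=
  exists L, is_lattice L /\ forall L', C L' <-> homothetic L L'.

Definition vertex := {C : (vec -> Prop) -> Prop | is_vertex C}.

Definition strict_sub (A B : vec -> Prop) : Prop :=
  (forall w, A w -> B w) /\ exists w, B w /\ ~ A w.

(* adjacency, for a uniformizer p *)
Definition adj (p : F) (x y : vertex) : Prop :=
  exists L L', proj1_sig x L /\ proj1_sig y L' /\
    strict_sub (scale_lat p L) L' /\ strict_sub L' L.

Fixpoint walk (p : F) (x y : vertex) (n : nat) : Prop :=
  match n with
  | 0 => x = y
  | n'.+1 => exists z, adj p x z /\ walk p z y n'
  end.

Definition dist (p : F) (x y : vertex) (n : nat) : Prop :=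
  walk p x y n /\ forall m, (m < n)%N -> ~ walk p x y m.

Definition is_aut (p : F) (g : vertex -> vertex) : Prop :=
  bijective g /\ forall x y n, dist p x y n <-> dist p (g x) (g y) n.

Definition in_ball (p : F) (x1 x2 : vertex) (e : nat) (y : vertex) : Prop :=
  exists n, (n <= e)%N /\ (dist p y x1 n \/ dist p y x2 n).

Definition mat_moves (M : 'M[F]_2) (y z : vertex) : Prop :=
  forall L', proj1_sig z L' <->
    exists L, proj1_sig y L /\ forall w, L' w <-> exists w0, L w0 /\ w = M *m w0.

Definition in_Ghat (p : F) (e : nat) (g : vertex -> vertex) : Prop :=
  is_aut p g /\
  forall x1 x2, adj p x1 x2 ->
    exists M : 'M[F]_2, M \in unitmx /\
      forall y, in_ball p x1 x2 e y -> mat_moves M y (g y).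

Definition ray (p : F) (r : nat -> vertex) : Prop :=
  injective r /\ forall i, adj p (r i) (r i.+1).

Definition equiv_rays (r1 r2 : nat -> vertex) : Prop :=
  exists a b : nat, forall i, r1 (a + i)%N = r2 (b + i)%N.

End BTTree.

(* Main.v *)
From Stdlib Require Import FunctionalExtensionality PropExtensionality ProofIrrelevance ClassicalEpsilon Classical.
Require Import Defs.
From HB Require Import structures.
From mathcomp Require Import all_boot all_order all_algebra.
From mathcomp Require Import zify ring.
Import Order.TTheory GRing.Theory Num.Theory.
Local Open Scope ring_scope.
Set Implicit Arguments. Unset Strict Implicit.

Section Main.
Variable F : fieldType.
Variable v : F -> int.
Variable p : F.
Hypothesis hmul : forall {x y : F}, x != 0 -> y != 0 -> v (x * y) = v x + v y.
Hypothesis hadd : forall {x y : F}, x != 0 -> y != 0 -> x + y != 0 ->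
          Num.min (v x) (v y) <= v (x + y).
Hypothesis hp0 : p != 0.
Hypothesis hp : v p = 1.

Lemma v1 : v 1 = 0.
Proof.
have := hmul (oner_neq0 F) (oner_neq0 F); rewrite mulr1 => h.
by have /addrI : v 1 + v 1 = v 1 + 0 by rewrite addr0 -h.
Qed.

Lemma vN1 : v (-1) = 0.
Proof.
have h : (-1 : F) != 0 by rewrite oppr_eq0 oner_neq0.
have := hmul h h; rewrite mulrNN mulr1 v1; lia.
Qed.

Lemma vN x : v (- x) = v x.
Proof.
have [->|hx] := eqVneq x 0; first by rewrite oppr0.
have h : (-1 : F) != 0 by rewrite oppr_eq0 oner_neq0.
by rewrite -mulN1r hmul // vN1 add0r.
Qed.

Lemma vV x : x != 0 -> v (x^-1) = - v x.
Proof.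
move=> hx; have hx' : x^-1 != 0 by rewrite invr_eq0.
have := hmul hx hx'; rewrite mulfV // v1; lia.
Qed.

Lemma vdiv x y : x != 0 -> y != 0 -> v (x / y) = v x - v y.
Proof. by move=> hx hy; rewrite hmul ?invr_eq0 // vV. Qed.

Lemma pX_neq0 n : p ^+ n != 0.
Proof. exact: expf_neq0. Qed.

Lemma vX n : v (p ^+ n) = n%:Z.
Proof.
elim: n => [|n IH]; first by rewrite expr0 v1.
by rewrite exprS hmul ?pX_neq0 // IH hp; lia.
Qed.

Lemma vadd (x y : F) : x != 0 -> y != 0 -> x + y != 0 -> (v x <= v (x + y)) \/ (v y <= v (x + y)).
Proof. by move=> hx hy hxy; have := hadd hx hy hxy; rewrite ge_min => /orP. Qed.
Arguments vadd {x y}.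

Definition dv (n : nat) (x : F) := x = 0 \/ n%:Z <= v x.

Lemma dv0 n : dv n 0. Proof. by left. Qed.

Lemma dv_o x : dv 0 x <-> in_o v x.
Proof. by []. Qed.

Lemma dv_add n x y : dv n x -> dv n y -> dv n (x + y).
Proof.
move=> [->|hx]; first by rewrite add0r.
move=> [->|hy]; first by rewrite addr0; right.
have [->|hs] := eqVneq (x + y) 0; first by left.
have [->|x0] := eqVneq x 0; first by rewrite add0r; right.
have [->|y0] := eqVneq y 0; first by rewrite addr0; right.
right; case: (vadd x0 y0 hs) => h; lia.
Qed.

Lemma dv_opp n x : dv n x -> dv n (- x).
Proof. by move=> [->|h]; [rewrite oppr0; left|right; rewrite vN]. Qed.

Lemma dv_sub n x y : dv n x -> dv n y -> dv n (x - y).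
Proof. by move=> hx hy; apply: dv_add => //; apply: dv_opp. Qed.

Lemma dv_mul n m x y : dv n x -> dv m y -> dv (n + m) (x * y).
Proof.
move=> [->|hx]; first by rewrite mul0r; left.
move=> [->|hy]; first by rewrite mulr0; left.
have [->|x0] := eqVneq x 0; first by rewrite mul0r; left.
have [->|y0] := eqVneq y 0; first by rewrite mulr0; left.
right; rewrite hmul //; lia.
Qed.

Lemma dv_le m n x : (m <= n)%N -> dv n x -> dv m x.
Proof. by move=> hmn [->|h]; [left|right; lia]. Qed.

Lemma dv_pX n : dv n (p ^+ n).
Proof. by right; rewrite vX. Qed.

Lemma dvP n x : dv n x <-> exists y, in_o v y /\ x = p ^+ n * y.
Proof.
split.
  move=> [->|h]; first by exists 0; split; [left|rewrite mulr0].
  have [->|x0] := eqVneq x 0; first by exists 0; split; [left|rewrite mulr0].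
  exists (x / p ^+ n); split; last by rewrite mulrC divfK ?pX_neq0.
  right; rewrite vdiv ?pX_neq0 // vX; lia.
move=> [y [hy ->]]; have := dv_mul (dv_pX n) hy; by rewrite addn0.
Qed.

Definition unit_o (x : F) := x != 0 /\ v x = 0.

Lemma unit_o_o x : unit_o x -> in_o v x.
Proof. by move=> [_ h]; right; rewrite h. Qed.

Lemma unit_inv x : unit_o x -> unit_o x^-1.
Proof. by move=> [h0 h]; split; [rewrite invr_eq0|rewrite vV // h]. Qed.

Lemma unit_mul x y : unit_o x -> unit_o y -> unit_o (x * y).
Proof. by move=> [h0 h] [k0 k]; split; [rewrite mulf_neq0|rewrite hmul // h k]. Qed.

Lemma unit_or_dv1 x : in_o v x -> unit_o x \/ dv 1 x.
Proof.
move=> [->|h]; first by right; left.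
have [->|x0] := eqVneq x 0; first by right; left.
have [e|ne] := eqVneq (v x) 0; first by left.
by right; right; lia.
Qed.

Lemma unit_not_dv1 x : unit_o x -> ~ dv 1 x.
Proof. by move=> [h0 h] [e|e]; [move: h0; rewrite e eqxx|lia]. Qed.

Lemma unit_add_dv1 x y : unit_o x -> dv 1 y -> unit_o (x + y).
Proof.
move=> [x0 hx] [->|hy]; first by rewrite addr0.
have [->|y0] := eqVneq y 0; first by rewrite addr0.
have s0 : x + y != 0.
  apply/eqP => e; move: hy; rewrite (_ : y = - x); last by apply/eqP; rewrite -addr_eq0 addrC e.
  rewrite vN; lia.
split => //.
have s1 : - y != 0 by rewrite oppr_eq0.
have x0' : (x + y) + (- y) != 0 by rewrite addrK.
have := vadd s0 s1 x0'; rewrite addrK vN.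
case: (vadd x0 y0 s0) => h [] h'; lia.
Qed.

Lemma o_mul x y : in_o v x -> in_o v y -> in_o v (x * y).
Proof. move=> hx hy; have := @dv_mul 0 0 x y hx hy; by []. Qed.
Lemma o_add x y : in_o v x -> in_o v y -> in_o v (x + y).
Proof. exact: (@dv_add 0). Qed.
Lemma o_opp x : in_o v x -> in_o v (- x).
Proof. exact: (@dv_opp 0). Qed.
Lemma o_sub x y : in_o v x -> in_o v y -> in_o v (x - y).
Proof. exact: (@dv_sub 0). Qed.
Lemma o0 : in_o v 0. Proof. by left. Qed.
Lemma o1 : in_o v 1. Proof. by right; rewrite v1. Qed.
Lemma op : in_o v p. Proof. by right; rewrite hp. Qed.
Lemma opX n : in_o v (p ^+ n). Proof. by right; rewrite vX. Qed.
Lemma dv_o' n x : dv n x -> in_o v x.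
Proof. by apply: dv_le. Qed.

Lemma unit_o_div x y : x != 0 -> y != 0 -> v x = v y -> unit_o (x / y).
Proof. by move=> hx hy e; split; [rewrite mulf_neq0 ?invr_eq0|rewrite vdiv // e subrr]. Qed.

Lemma exists_pow_o y : exists k, in_o v (p ^+ k * y).
Proof.
have [->|y0] := eqVneq y 0; first by exists 0%N; rewrite mulr0; left.
exists (absz (v y)); right; rewrite hmul ?pX_neq0 // vX; lia.
Qed.


Lemma l_lift (i : 'I_2) (j : 'I_1) : lift i j = if val i == 0%N then 1 else 0.
Proof. by apply/val_inj; rewrite (ord1 j) /= /bump; case: i => [[|[|//]]]. Qed.

Lemma l01 : lift ord0 (ord0 : 'I_1) = 1 :> 'I_2. Proof. by apply/val_inj. Qed.

Lemma det22 (B : 'M[F]_2) : \det B = B 0 0 * B 1 1 - B 0 1 * B 1 0.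
Proof.
rewrite (expand_det_row _ 0) !big_ord_recl big_ord0 addr0 /cofactor !det_mx11 /=.
by rewrite !mxE /= !l_lift /= expr0 expr1 mul1r mulN1r mulrN.
Qed.

Lemma mul2 (B : 'M[F]_2) (c : 'cV[F]_2) i : (B *m c) i 0 = B i 0 * c 0 0 + B i 1 * c 1 0.
Proof. by rewrite mxE !big_ord_recl big_ord0 addr0 l01. Qed.

Notation V := 'cV[F]_2.

Lemma vec2P (a b : V) : a 0 0 = b 0 0 -> a 1 0 = b 1 0 -> a = b.
Proof.
move=> h0 h1; apply/matrixP => i j; rewrite (ord1 j).
case: i => [[|[|//]]] Hi.
  by rewrite (_ : Ordinal Hi = 0) //; apply/val_inj.
by rewrite (_ : Ordinal Hi = 1) //; apply/val_inj.
Qed.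

Definition mkv (x y : F) : V := \col_i (if i == 0 then x else y).
Lemma mkv0 x y : mkv x y 0 0 = x. Proof. by rewrite mxE. Qed.
Lemma mkv1 x y : mkv x y 1 0 = y. Proof. by rewrite mxE. Qed.

Definition O2 (z : V) := in_o v (z 0 0) /\ in_o v (z 1 0).
Definition DV n (z : V) := dv n (z 0 0) /\ dv n (z 1 0).
Definition det2 (a b : V) := a 0 0 * b 1 0 - a 1 0 * b 0 0.
Definition prim (a : V) := O2 a /\ (unit_o (a 0 0) \/ unit_o (a 1 0)).
Definition span2 (x y : V) : V -> Prop :=
  fun w => exists al be, in_o v al /\ in_o v be /\ w = al *: x + be *: y.

Lemma DV_O2 n z : DV n z -> O2 z.
Proof. by case=> h0 h1; split; apply: dv_o'; eauto. Qed.
Lemma DV_add n x y : DV n x -> DV n y -> DV n (x + y).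
Proof. by case=> ? ? [? ?]; split; rewrite mxE; apply: dv_add. Qed.
Lemma DV_opp n x : DV n x -> DV n (- x).
Proof. by case=> ? ?; split; rewrite mxE; apply: dv_opp. Qed.
Lemma DV_sub n x y : DV n x -> DV n y -> DV n (x - y).
Proof. by move=> hx hy; apply: DV_add => //; apply: DV_opp. Qed.
Lemma DV_le m n x : (m <= n)%N -> DV n x -> DV m x.
Proof. by move=> h [? ?]; split; apply: dv_le h _. Qed.
Lemma DV_scale m n c x : dv m c -> DV n x -> DV (m + n) (c *: x).
Proof. by move=> hc [? ?]; split; rewrite mxE; apply: dv_mul. Qed.
Lemma O2_DV z : O2 z -> DV 0 z. Proof. by []. Qed.
Lemma O2_add x y : O2 x -> O2 y -> O2 (x + y). Proof. exact: (@DV_add 0). Qed.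
Lemma O2_sub x y : O2 x -> O2 y -> O2 (x - y). Proof. exact: (@DV_sub 0). Qed.
Lemma O2_scale c x : in_o v c -> O2 x -> O2 (c *: x).
Proof. move=> hc hx; exact: (@DV_scale 0 0). Qed.
Lemma DV_pX n z : O2 z -> DV n (p ^+ n *: z).
Proof. by move=> hz; have := DV_scale (dv_pX n) (O2_DV hz); rewrite addn0. Qed.

Lemma DVP n z : DV n z <-> exists y, O2 y /\ z = p ^+ n *: y.
Proof.
split.
  case=> /dvP [a [ha ea]] /dvP [b [hb eb]].
  exists (mkv a b); split; first by rewrite /O2 mkv0 mkv1.
  by apply: vec2P; rewrite !mxE.
by move=> [y [hy ->]]; apply: DV_pX.
Qed.

Lemma cramer x y z : det2 x y != 0 ->
  z = (det2 z y / det2 x y) *: x + (det2 x z / det2 x y) *: y.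
Proof.
move=> hd; apply: vec2P; rewrite !mxE; move: hd; rewrite /det2 => hd; field => //.
Qed.

Lemma span2_x x y : span2 x y x.
Proof. by exists 1, 0; split; [exact: o1|split; [exact: o0|rewrite scale1r scale0r addr0]]. Qed.
Lemma span2_y x y : span2 x y y.
Proof. by exists 0, 1; split; [exact: o0|split; [exact: o1|rewrite scale1r scale0r add0r]]. Qed.
Lemma span2_add x y a b : span2 x y a -> span2 x y b -> span2 x y (a + b).
Proof.
move=> [a1 [a2 [h1 [h2 ->]]]] [b1 [b2 [k1 [k2 ->]]]].
exists (a1 + b1), (a2 + b2); split; first exact: o_add.
split; first exact: o_add.
by rewrite !scalerDl; rewrite addrACA.
Qed.
Lemma span2_scale x y c a : in_o v c -> span2 x y a -> span2 x y (c *: a).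
Proof.
move=> hc [a1 [a2 [h1 [h2 ->]]]].
exists (c * a1), (c * a2); split; first exact: o_mul.
split; first exact: o_mul.
by rewrite scalerDr !scalerA.
Qed.
Lemma span2_comb x y c d a b : in_o v c -> in_o v d -> span2 x y a -> span2 x y b ->
  span2 x y (c *: a + d *: b).
Proof. by move=> hc hd ha hb; apply: span2_add; apply: span2_scale. Qed.
Lemma span2_opp x y a : span2 x y a -> span2 x y (- a).
Proof. by move=> h; rewrite -scaleN1r; apply: span2_scale => //; apply: o_opp; exact: o1. Qed.
Lemma span2_sub x y a b : span2 x y a -> span2 x y b -> span2 x y (a - b).
Proof. by move=> ha hb; apply: span2_add => //; apply: span2_opp. Qed.

Lemma O2_span (x y z : V) : O2 x -> O2 y -> span2 x y z -> O2 z.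
Proof.
move=> hx hy [a [b [ha [hb ->]]]]; apply: O2_add; exact: O2_scale.
Qed.

Lemma unit_o_neq0 x : unit_o x -> x != 0. Proof. by case. Qed.

Lemma basis a f : O2 a -> O2 f -> unit_o (det2 a f) -> forall z, O2 z <-> span2 a f z.
Proof.
move=> ha hf hd z; split; last exact: O2_span.
move=> hz; have d0 := unit_o_neq0 hd.
have hi : in_o v (det2 a f)^-1 by apply: unit_o_o; apply: unit_inv.
have od : forall x y, O2 x -> O2 y -> in_o v (det2 x y).
  move=> x y [? ?] [? ?]; rewrite /det2; apply: o_sub; exact: o_mul.
exists (det2 z f / det2 a f), (det2 a z / det2 a f).
split; first by apply: o_mul => //; apply: od.
split; first by apply: o_mul => //; apply: od.
exact: cramer.
Qed.

Lemma prim_det x f : O2 x -> O2 f -> unit_o (det2 x f) -> prim x.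
Proof.
move=> hx hf hd; split => //.
case: hx => h0 h1.
case: (unit_or_dv1 h0) => [u|d0]; first by left.
case: (unit_or_dv1 h1) => [u|d1]; first by right.
exfalso; apply: (unit_not_dv1 hd).
case: hf => k0 k1.
rewrite /det2; apply: dv_sub.
  exact: (dv_mul d0 k1).
exact: (dv_mul d1 k0).
Qed.

Lemma unit_oN x : unit_o x -> unit_o (- x).
Proof. by case=> h0 h; split; [rewrite oppr_eq0|rewrite vN]. Qed.

Lemma completion a : prim a -> exists f, O2 f /\ unit_o (det2 a f).
Proof.
move=> [ha [u|u]].
  exists (mkv 0 1); split; first by rewrite /O2 mkv0 mkv1; split; [exact: o0|exact: o1].
  by rewrite /det2 mkv0 mkv1 mulr1 mulr0 subr0.
exists (mkv 1 0); split; first by rewrite /O2 mkv0 mkv1; split; [exact: o1|exact: o0].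
by rewrite /det2 mkv0 mkv1 mulr0 mulr1 sub0r; apply: unit_oN.
Qed.

Lemma prim_O2 a : prim a -> O2 a. Proof. by case. Qed.

Lemma prim_mod a u : prim a -> DV 1 (u - a) -> prim u.
Proof.
move=> [[h0 h1] hu] [d0 d1]; move: d0 d1; rewrite !mxE => d0 d1.
have e0 : u 0 0 = a 0 0 + (u 0 0 - a 0 0) by rewrite addrC subrK.
have e1 : u 1 0 = a 1 0 + (u 1 0 - a 1 0) by rewrite addrC subrK.
split.
  split; [rewrite e0|rewrite e1]; apply: o_add => //; exact: dv_o' d0 || exact: dv_o' d1.
case: hu => hu; [left; rewrite e0|right; rewrite e1]; exact: unit_add_dv1.
Qed.


Lemma setE (A B : V -> Prop) : (forall w, A w <-> B w) -> A = B.
Proof.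
move=> h; apply: functional_extensionality => w.
by apply: propositional_extensionality.
Qed.

Lemma scale1 (L : V -> Prop) : scale_lat 1 L = L.
Proof.
apply: setE => w; split; first by move=> [w0 [h ->]]; rewrite scale1r.
by move=> h; exists w; rewrite scale1r.
Qed.

Lemma scaleM a b (L : V -> Prop) : scale_lat a (scale_lat b L) = scale_lat (a * b) L.
Proof.
apply: setE => w; split.
  by move=> [w0 [[w1 [h ->]] ->]]; exists w1; rewrite scalerA.
by move=> [w1 [h ->]]; exists (b *: w1); split; [exists w1|rewrite scalerA].
Qed.

Lemma scale_span c x y : scale_lat c (span2 x y) = span2 (c *: x) (c *: y).
Proof.
apply: setE => w; split.
  move=> [w0 [[a [b [ha [hb ->]]]] ->]]; exists a, b; do 2 split => //.
  by rewrite scalerDr !scalerA mulrC [c * b]mulrC.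
move=> [a [b [ha [hb ->]]]]; exists (a *: x + b *: y); split.
  by exists a, b.
by rewrite scalerDr !scalerA mulrC [c * b]mulrC.
Qed.

Lemma homotE (L L' : V -> Prop) : homothetic L L' <-> exists c, c != 0 /\ L' = scale_lat c L.
Proof.
split; move=> [c [c0 h]]; exists c; split => //.
  exact: setE.
by rewrite h.
Qed.

Lemma homot_refl (L : V -> Prop) : homothetic L L.
Proof. by apply/homotE; exists 1; rewrite scale1 oner_neq0. Qed.

Lemma homot_sym (L L' : V -> Prop) : homothetic L L' -> homothetic L' L.
Proof.
move/homotE=> [c [c0 ->]]; apply/homotE; exists c^-1; split; first by rewrite invr_eq0.
by rewrite scaleM mulVf // scale1.
Qed.

Lemma homot_trans (L1 L2 L3 : V -> Prop) : homothetic L1 L2 -> homothetic L2 L3 -> homothetic L1 L3.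
Proof.
move/homotE=> [c [c0 ->]] /homotE [d [d0 ->]]; apply/homotE; exists (d * c).
by rewrite scaleM mulf_neq0.
Qed.

Definition lat (B : 'M[F]_2) : V -> Prop :=
  fun w => exists c : V, (forall i, in_o v (c i 0)) /\ w = B *m c.

Lemma allO2 (c : V) : (forall i, in_o v (c i 0)) <-> O2 c.
Proof.
split; first by move=> h; split; apply: h.
move=> [h0 h1] i; case: i => [[|[|//]]] Hi.
  by rewrite (_ : Ordinal Hi = 0) //; apply/val_inj.
by rewrite (_ : Ordinal Hi = 1) //; apply/val_inj.
Qed.

Lemma mul2v (B : 'M[F]_2) (c : V) : B *m c = c 0 0 *: col 0 B + c 1 0 *: col 1 B.
Proof. by apply: vec2P; rewrite mul2 !mxE [c 0 0 * _]mulrC [c 1 0 * _]mulrC. Qed.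

Lemma lat_span B : lat B = span2 (col 0 B) (col 1 B).
Proof.
apply: setE => w; split.
  move=> [c [/allO2 [h0 h1] ->]]; exists (c 0 0), (c 1 0); do 2 split => //.
  exact: mul2v.
move=> [a [b [ha [hb ->]]]]; exists (mkv a b); split.
  by apply/allO2; rewrite /O2 mkv0 mkv1.
by rewrite mul2v mkv0 mkv1.
Qed.

Definition mat2 (x y : V) : 'M[F]_2 := \matrix_(i, j) (if j == 0 then x i 0 else y i 0).

Lemma col_mat2_0 x y : col 0 (mat2 x y) = x.
Proof. by apply: vec2P; rewrite !mxE. Qed.
Lemma col_mat2_1 x y : col 1 (mat2 x y) = y.
Proof. by apply: vec2P; rewrite !mxE. Qed.
Lemma det_mat2 x y : \det (mat2 x y) = det2 x y.
Proof. by rewrite det22 !mxE /det2 /= [y 0 0 * _]mulrC. Qed.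
Lemma det_col B : det2 (col 0 B) (col 1 B) = \det B.
Proof. by rewrite det22 /det2 !mxE [B 0 1 * _]mulrC. Qed.

Lemma unitmx2 (B : 'M[F]_2) : (B \in unitmx) = (\det B != 0).
Proof. by rewrite unitmxE unitfE. Qed.

Lemma latticeP L : is_lattice v L <-> exists x y, det2 x y != 0 /\ L = span2 x y.
Proof.
split.
  move=> [B [hB h]]; exists (col 0 B), (col 1 B); split.
    by rewrite det_col -unitmx2.
  rewrite -lat_span; exact: setE.
move=> [x [y [hd ->]]]; exists (mat2 x y); split; first by rewrite unitmx2 det_mat2.
by move=> w; rewrite -/(lat _ w) lat_span col_mat2_0 col_mat2_1.
Qed.

Lemma latticeB L : is_lattice v L <-> exists B, B \in unitmx /\ L = lat B.
Proof.
split.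
  by move=> [B [hB h]]; exists B; split => //; apply: setE.
by move=> [B [hB ->]]; exists B.
Qed.

Lemma det2_scale c x y : det2 (c *: x) (c *: y) = c ^+ 2 * det2 x y.
Proof. by rewrite /det2 !mxE expr2; ring. Qed.

Lemma lattice_scale c L : c != 0 -> is_lattice v L -> is_lattice v (scale_lat c L).
Proof.
move=> c0 /latticeP [x [y [hd ->]]]; apply/latticeP.
exists (c *: x), (c *: y); split; last exact: scale_span.
by rewrite det2_scale mulf_neq0 // expf_neq0.
Qed.

Definition image (M : 'M[F]_2) (L : V -> Prop) : V -> Prop :=
  fun w => exists w0, L w0 /\ w = M *m w0.

Lemma image_lat M B : image M (lat B) = lat (M *m B).
Proof.
apply: setE => w; split.
  by move=> [w0 [[c [hc ->]] ->]]; exists c; rewrite mulmxA.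
by move=> [c [hc ->]]; exists (B *m c); split; [exists c|rewrite mulmxA].
Qed.

Lemma lattice_image M L : M \in unitmx -> is_lattice v L -> is_lattice v (image M L).
Proof.
move=> hM /latticeB [B [hB ->]]; apply/latticeB; exists (M *m B).
by rewrite unitmx_mul hM hB image_lat.
Qed.

Lemma image_scale M c L : image M (scale_lat c L) = scale_lat c (image M L).
Proof.
apply: setE => w; split.
  by move=> [w0 [[w1 [h ->]] ->]]; exists (M *m w1); split; [exists w1|rewrite scalemxAr].
by move=> [w0 [[w1 [h ->]] ->]]; exists (c *: w1); split; [exists w1|rewrite scalemxAr].
Qed.

Lemma image_comp X Y L : image (X *m Y) L = image X (image Y L).
Proof.
apply: setE => w; split.
  by move=> [w0 [h ->]]; exists (Y *m w0); split; [exists w0|rewrite mulmxA].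
by move=> [w0 [[w1 [h ->]] ->]]; exists w1; rewrite mulmxA.
Qed.

Lemma image1 L : image 1%:M L = L.
Proof.
apply: setE => w; split; first by move=> [w0 [h ->]]; rewrite mul1mx.
by move=> h; exists w; rewrite mul1mx.
Qed.

Lemma image_span M x y : image M (span2 x y) = span2 (M *m x) (M *m y).
Proof.
apply: setE => w; split.
  move=> [w0 [[a [b [ha [hb ->]]]] ->]]; exists a, b; do 2 split => //.
  by rewrite mulmxDr -!scalemxAr.
move=> [a [b [ha [hb ->]]]]; exists (a *: x + b *: y); split; first by exists a, b.
by rewrite mulmxDr -!scalemxAr.
Qed.

Lemma strict_sub_image M (A B : V -> Prop) : M \in unitmx -> strict_sub A B ->
  strict_sub (image M A) (image M B).
Proof.
move=> hM [hs [w [hB hA]]]; split.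
  by move=> z [w0 [h ->]]; exists w0; split => //; apply: hs.
exists (M *m w); split; first by exists w.
move=> [w0 [h e]]; apply: hA.
by have := congr1 (mulmx (invmx M)) e; rewrite !mulKmx // => ->.
Qed.

Lemma strict_sub_scale c (A B : V -> Prop) : c != 0 -> strict_sub A B ->
  strict_sub (scale_lat c A) (scale_lat c B).
Proof.
move=> c0 [hs [w [hB hA]]]; split.
  by move=> z [w0 [h ->]]; exists w0; split => //; apply: hs.
exists (c *: w); split; first by exists w.
move=> [w0 [h e]]; apply: hA.
by have := congr1 (fun z => c^-1 *: z) e; rewrite /= !scalerA mulVf // !scale1r => ->.
Qed.

Lemma strict_sub_eq (A B A' B' : V -> Prop) : A = A' -> B = B' -> strict_sub A B -> strict_sub A' B'.
Proof. by move=> -> ->. Qed.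

Definition vpred (x : vertex v) := proj1_sig x.

Lemma vext (x y : vertex v) : (forall L, vpred x L <-> vpred y L) -> x = y.
Proof.
case: x => P hP; case: y => Q hQ /= h.
have e : P = Q.
  apply: functional_extensionality => L; apply: propositional_extensionality; exact: h.
subst Q; f_equal; apply: proof_irrelevance.
Qed.

Lemma vmem (x : vertex v) : exists L, vpred x L.
Proof. case: x => P [L [hL h]] /=; exists L; apply/h; exact: homot_refl. Qed.

Lemma vmem_homot (x : vertex v) L L' : vpred x L -> (vpred x L' <-> homothetic L L').
Proof.
case: x => P [L0 [hL h]] /=; rewrite !h => h1; split.
  by move=> h2; apply: homot_trans h2; apply: homot_sym.
by move=> h2; apply: homot_trans h2.
Qed.

Lemma vsame (x y : vertex v) L : vpred x L -> vpred y L -> x = y.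
Proof.
move=> hx hy; apply: vext => L'.
by rewrite (vmem_homot _ hx) (vmem_homot _ hy).
Qed.

Lemma vmem_scale (x : vertex v) L c : vpred x L -> c != 0 -> vpred x (scale_lat c L).
Proof.
by move=> h c0; apply/(vmem_homot _ h)/homotE; exists c.
Qed.

Lemma vmem_lattice (x : vertex v) L : vpred x L -> is_lattice v L.
Proof.
case: x => P [L0 [hL h]] /=; rewrite h => /homotE [c [c0 ->]].
exact: lattice_scale.
Qed.


Definition act_pred (M : 'M[F]_2) (x : vertex v) : (V -> Prop) -> Prop :=
  fun L' => exists L, vpred x L /\ forall w, L' w <-> image M L w.

Lemma act_is_vertex M x : M \in unitmx -> is_vertex v (act_pred M x).
Proof.
move=> hM; have [L0 h0] := vmem x.
exists (image M L0); split; first by apply: lattice_image => //; exact: vmem_lattice h0.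
move=> L'; split.
  move=> [L [hL e]]; have eL : L' = image M L by apply: setE.
  move: hL; rewrite (vmem_homot _ h0) => /homotE [c [c0 eL0]].
  by apply/homotE; exists c; split => //; rewrite eL eL0 image_scale.
move=> /homotE [c [c0 ->]]; exists (scale_lat c L0); split; first exact: vmem_scale.
by rewrite image_scale.
Qed.

Definition actv (M : 'M[F]_2) (x : vertex v) : vertex v :=
  match Sumbool.sumbool_of_bool (M \in unitmx) with
  | left h => exist _ (act_pred M x) (act_is_vertex x h)
  | right _ => x
  end.

Lemma actvP M x : M \in unitmx -> vpred (actv M x) = act_pred M x.
Proof.
move=> hM; rewrite /actv; case: Sumbool.sumbool_of_bool => h //.
by rewrite hM in h.
Qed.

Lemma actv_mem M x L : M \in unitmx -> vpred x L -> vpred (actv M x) (image M L).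
Proof. by move=> hM hL; rewrite actvP //; exists L. Qed.

Lemma actv_comp X Y x : X \in unitmx -> Y \in unitmx -> actv (X *m Y) x = actv X (actv Y x).
Proof.
move=> hX hY; have [L hL] := vmem x.
apply: (@vsame _ _ (image (X *m Y) L)); first by apply: actv_mem => //; rewrite unitmx_mul hX.
by rewrite image_comp; apply: actv_mem => //; apply: actv_mem.
Qed.

Lemma actv1 x : actv 1%:M x = x.
Proof.
have [L hL] := vmem x.
apply: (@vsame _ _ L) => //; have := @actv_mem 1%:M x L (unitmx1 _ _) hL; by rewrite image1.
Qed.

Lemma actvK M x : M \in unitmx -> actv (invmx M) (actv M x) = x.
Proof. by move=> hM; rewrite -actv_comp ?unitmx_inv // mulVmx // actv1. Qed.

Lemma actvKV M x : M \in unitmx -> actv M (actv (invmx M) x) = x.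
Proof. by move=> hM; rewrite -actv_comp ?unitmx_inv // mulmxV // actv1. Qed.

Lemma adj_actv M x y : M \in unitmx -> adj p x y -> adj p (actv M x) (actv M y).
Proof.
move=> hM [L [L' [hx [hy [s1 s2]]]]].
exists (image M L), (image M L'); split; first exact: actv_mem.
split; first exact: actv_mem.
split; last exact: strict_sub_image.
by rewrite -image_scale; apply: strict_sub_image.
Qed.

Lemma walk_actv M x y n : M \in unitmx -> walk p x y n -> walk p (actv M x) (actv M y) n.
Proof.
move=> hM; elim: n x => [|n IH] x /=; first by move=> ->.
move=> [z [hz hw]]; exists (actv M z); split; [exact: adj_actv|exact: IH].
Qed.

Lemma walk_actv_iff M x y n : M \in unitmx -> walk p x y n <-> walk p (actv M x) (actv M y) n.
Proof.
move=> hM; split; first exact: walk_actv.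
move=> h; rewrite -(actvK x hM) -(actvK y hM); apply: walk_actv => //.
by rewrite unitmx_inv.
Qed.

Lemma is_aut_actv M : M \in unitmx -> is_aut p (actv M).
Proof.
move=> hM; split.
  by exists (actv (invmx M)) => x; [apply: actvK|apply: actvKV].
move=> x y n; rewrite /dist; split.
  move=> [h1 h2]; split; first exact: (proj1 (walk_actv_iff _ _ _ hM) h1).
  by move=> m hm h3; apply: (h2 m hm); apply: (proj2 (walk_actv_iff _ _ _ hM) h3).
move=> [h1 h2]; split; first exact: (proj2 (walk_actv_iff _ _ _ hM) h1).
by move=> m hm h3; apply: (h2 m hm); apply: (proj1 (walk_actv_iff _ _ _ hM) h3).
Qed.

Lemma in_Ghat_actv M e : M \in unitmx -> in_Ghat p e (actv M).
Proof.
move=> hM; split; first exact: is_aut_actv.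
move=> x1 x2 _; exists M; split => // y _ L'.
by rewrite /= -/(vpred _ _) actvP.
Qed.


Definition Rv (a : V) (n : nat) : V -> Prop :=
  fun z => exists al y, in_o v al /\ O2 y /\ z = al *: a + p ^+ n *: y.

Lemma Rv_span a f n : O2 a -> O2 f -> unit_o (det2 a f) -> Rv a n = span2 a (p ^+ n *: f).
Proof.
move=> ha hf hd; apply: setE => z; split.
  move=> [al [y [hal [hy ->]]]].
  have [b0 [b1 [h0 [h1 ey]]]] := proj1 (basis ha hf hd y) hy.
  exists (al + p ^+ n * b0), b1; split; first by apply: o_add => //; apply: o_mul => //; exact: opX.
  split => //; rewrite ey; apply: vec2P; rewrite !mxE; ring.
move=> [al [be [hal [hbe ->]]]]; exists al, (be *: f); split => //.
split; first exact: O2_scale.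
by rewrite !scalerA mulrC.
Qed.

Lemma Rv_sub a a' n : DV n (a' - a) -> forall z, Rv a' n z -> Rv a n z.
Proof.
move=> /DVP [y0 [hy0 e]] z [al [y [hal [hy ->]]]].
exists al, (al *: y0 + y); split => //; split.
  by apply: O2_add => //; apply: O2_scale.
have -> : a' = a + p ^+ n *: y0 by rewrite -e addrC subrK.
apply: vec2P; rewrite !mxE; ring.
Qed.

Lemma Rv_congr a a' n : DV n (a' - a) -> Rv a' n = Rv a n.
Proof.
move=> h; apply: setE => z; split; first exact: Rv_sub.
apply: Rv_sub; rewrite -opprB; exact: DV_opp.
Qed.

Lemma det2_scaler c x y : det2 x (c *: y) = c * det2 x y.
Proof. by rewrite /det2 !mxE; ring. Qed.

Lemma Rv_lattice a n : prim a -> is_lattice v (Rv a n).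
Proof.
move=> ha; have [f [hf hd]] := completion ha.
rewrite (Rv_span n (prim_O2 ha) hf hd); apply/latticeP.
exists a, (p ^+ n *: f); split => //.
by rewrite det2_scaler mulf_neq0 ?pX_neq0 // unit_o_neq0.
Qed.

Lemma Rv0 a : prim a -> Rv a 0 = O2.
Proof.
move=> ha; apply: setE => z; split.
  move=> [al [y [hal [hy ->]]]]; rewrite expr0 scale1r.
  by apply: O2_add => //; apply: O2_scale => //; exact: prim_O2.
move=> hz; exists 0, z; split; first exact: o0.
by split => //; rewrite scale0r add0r expr0 scale1r.
Qed.


Lemma o_inv_unit x : unit_o x -> in_o v x^-1.
Proof. by move=> h; apply: unit_o_o; apply: unit_inv. Qed.

Lemma o_div x y : in_o v x -> unit_o y -> in_o v (x / y).
Proof. by move=> hx hy; apply: o_mul => //; apply: o_inv_unit. Qed.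

Lemma dv1P x : dv 1 x -> exists y, in_o v y /\ x = p * y.
Proof. by move/dvP => [y [hy e]]; exists y; rewrite e expr1. Qed.

Lemma classify a n (L : V -> Prop) : prim a -> is_lattice v L ->
  strict_sub (scale_lat p (Rv a n)) L -> strict_sub L (Rv a n) ->
  (exists w, prim w /\ DV n (w - a) /\ L = Rv w n.+1) \/
  ((0 < n)%N /\ L = scale_lat p (Rv a n.-1)).
Proof.
move=> hpa hL [spL [w [hwL hwpR]]] [sL [w1 [hw1R hw1L]]].
have ha := prim_O2 hpa.
have [f [hf hd]] := completion hpa.
have eR := Rv_span n ha hf hd.
have [x [y [_ eL]]] := proj1 (latticeP L) hL.
have Lcomb : forall c d z1 z2, in_o v c -> in_o v d -> L z1 -> L z2 -> L (c *: z1 + d *: z2).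
  by rewrite eL => *; apply: span2_comb.
have Lscale : forall c z1, in_o v c -> L z1 -> L (c *: z1).
  by rewrite eL => *; apply: span2_scale.
have Lsub : forall z1 z2, L z1 -> L z2 -> L (z1 - z2).
  by rewrite eL => *; apply: span2_sub.
have pRL : forall z, Rv a n z -> L (p *: z).
  by move=> z hz; apply: spL; exists z.
have contra : L a -> L (p ^+ n *: f) -> False.
  move=> h1 h2; apply: hw1L; move: hw1R; rewrite eR => -[g [d [hg [hd' ->]]]].
  exact: (Lcomb).
have inR : forall z, L z -> exists g d, in_o v g /\ in_o v d /\ z = g *: a + d *: (p ^+ n *: f).
  by move=> z /sL; rewrite eR.
have aR : Rv a n a by rewrite eR; apply: span2_x.
have fR : Rv a n (p ^+ n *: f) by rewrite eR; apply: span2_y.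
have [al [be [hal [hbe ew]]]] := inR w hwL.
have d0 := unit_o_neq0 hd.
case: (unit_or_dv1 hal) => [ual|dal].
  have al0 := unit_o_neq0 ual.
  pose t := be / al.
  have ht : in_o v t by apply: o_div.
  pose w' := a + t *: (p ^+ n *: f).
  have ew' : w' = al^-1 *: w.
    by rewrite ew; apply: vec2P; rewrite /w' /t !mxE; field.
  have hw'L : L w' by rewrite ew'; apply: (Lscale) => //; apply: o_inv_unit.
  have hw'O : O2 w' by apply: O2_add => //; apply: O2_scale => //; apply: O2_scale => //; exact: opX.
  have dw' : det2 w' f = det2 a f by rewrite /w' /det2 !mxE; ring.
  have hd2 : unit_o (det2 w' f) by rewrite dw'.
  left; exists w'; split; first exact: (prim_det hw'O hf hd2).
  split.
    rewrite /w' addrC addKr; apply/DVP; exists (t *: f); split; first exact: O2_scale.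
    by rewrite !scalerA mulrC.
  rewrite (Rv_span n.+1 hw'O hf hd2); apply: setE => z; split.
    move=> hz; have [g [d [hg [hd3 ez]]]] := inR z hz.
    pose eps := d - g * t.
    have heps : in_o v eps by apply: o_sub => //; apply: o_mul.
    have ez' : z - g *: w' = eps *: (p ^+ n *: f).
      rewrite ez; apply: vec2P; rewrite /w' /eps !mxE; ring.
    have hz'L : L (eps *: (p ^+ n *: f)) by rewrite -ez'; apply: (Lsub) => //; apply: (Lscale).
    case: (unit_or_dv1 heps) => [ueps|deps].
      exfalso; have hfL : L (p ^+ n *: f).
        have -> : p ^+ n *: f = eps^-1 *: (eps *: (p ^+ n *: f)).
          by rewrite [eps^-1 *: _]scalerA mulVf ?scale1r // unit_o_neq0.
        by apply: (Lscale) => //; apply: o_inv_unit.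
      have haL : L a by have := Lsub _ _ hw'L (Lscale _ _ ht hfL); rewrite /w' addrK.
      exact: contra haL hfL.
    have [e' [he' ee]] := dv1P deps.
    exists g, e'; split => //; split => //.
    have -> : z = g *: w' + eps *: (p ^+ n *: f) by rewrite -ez' addrC subrK.
    rewrite ee exprS; apply: vec2P; rewrite !mxE; ring.
  move=> [c [d [hc [hd3 ->]]]]; apply: (Lcomb) => //.
  rewrite exprS -scalerA; apply: (pRL) => //.
case: (unit_or_dv1 hbe) => [ube|dbe]; last first.
  exfalso; apply: hwpR.
  have [al' [hal' eal]] := dv1P dal.
  have [be' [hbe' ebe]] := dv1P dbe.
  exists (al' *: a + be' *: (p ^+ n *: f)); split.
    by rewrite eR; apply: span2_comb => //; [apply: span2_x|apply: span2_y].
  rewrite ew eal ebe; apply: vec2P; rewrite !mxE; ring.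
have be0 := unit_o_neq0 ube.
have hbeI : in_o v be^-1 by apply: o_inv_unit.
have Lpa : L (p *: a) by apply: (pRL).
have [al' [hal' eal]] := dv1P dal.
have [n0|npos] := posnP n; last first.
  right; split => //.
  have hfL : L (p ^+ n *: f).
    have -> : p ^+ n *: f = be^-1 *: (w - al' *: (p *: a)).
      rewrite ew eal; apply: vec2P; rewrite !mxE; field => //.
    by apply: (Lscale) => //; apply: (Lsub) => //; apply: (Lscale).
  have epf : p *: (p ^+ n.-1 *: f) = p ^+ n *: f by rewrite scalerA -exprS prednK.
  rewrite (Rv_span n.-1 ha hf hd) scale_span epf.
  apply: setE => z; split.
    move=> hz; have [g [d [hg [hd3 ez]]]] := inR z hz.
    have hdb : in_o v (d / be) by apply: o_div.
    pose eps := g - d / be * al.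
    have ez' : z - (d / be) *: w = eps *: a.
      rewrite ez ew; apply: vec2P; rewrite /eps !mxE; field => //.
    have heps : in_o v eps by apply: o_sub => //; apply: o_mul.
    case: (unit_or_dv1 heps) => [ueps|deps].
      exfalso; apply: (contra) hfL.
      have -> : a = eps^-1 *: (eps *: a).
        by rewrite [eps^-1 *: _]scalerA mulVf ?scale1r // unit_o_neq0.
      apply: (Lscale); first exact: o_inv_unit.
      by rewrite -ez'; apply: (Lsub) => //; apply: (Lscale).
    have dg : dv 1 g.
      have -> : g = eps + d / be * al by rewrite /eps subrK.
      by apply: dv_add => //; apply: (dv_mul hdb dal).
    have [g' [hg' eg]] := dv1P dg.
    exists g', d; split => //; split => //.
    by rewrite ez eg; apply: vec2P; rewrite !mxE; ring.
  move=> [c [d [hc [hd3 ->]]]]; exact: (Lcomb).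
subst n.
rewrite expr0 scale1r in ew inR contra fR.
have hwO : O2 w by rewrite ew; apply: O2_add; apply: O2_scale.
have dw : det2 w a = - (be * det2 a f) by rewrite ew /det2 !mxE; ring.
have hdw : unit_o (det2 w a) by rewrite dw; apply: unit_oN; apply: unit_mul.
left; exists w; split; first exact: (prim_det hwO ha hdw).
split; first exact: (O2_sub hwO ha).
rewrite (Rv_span 1 hwO ha hdw) expr1.
apply: setE => z; split.
  move=> hz; have [g [d [hg [hd3 ez]]]] := inR z hz.
  have hdb : in_o v (d / be) by apply: o_div.
  pose eps := g - d / be * al.
  have ez' : z - (d / be) *: w = eps *: a.
    rewrite ez ew; apply: vec2P; rewrite /eps !mxE; field => //.
  have heps : in_o v eps by apply: o_sub => //; apply: o_mul.
  have hzL : L (eps *: a) by rewrite -ez'; apply: (Lsub) => //; apply: (Lscale).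
  case: (unit_or_dv1 heps) => [ueps|deps].
    exfalso.
    have haL : L a.
      have -> : a = eps^-1 *: (eps *: a).
        by rewrite [eps^-1 *: _]scalerA mulVf ?scale1r // unit_o_neq0.
      by apply: (Lscale) => //; apply: o_inv_unit.
    apply: (contra haL).
    have -> : f = be^-1 *: (w - al *: a) by rewrite ew; apply: vec2P; rewrite !mxE; field.
    by apply: (Lscale) => //; apply: (Lsub) => //; apply: (Lscale).
  have [e' [he' ee]] := dv1P deps.
  exists (d / be), e'; split => //; split => //.
  have -> : z = (d / be) *: w + eps *: a by rewrite -ez' addrC subrK.
  by rewrite ee; apply: vec2P; rewrite !mxE; ring.
move=> [c [d [hc [hd3 ->]]]]; exact: (Lcomb).
Qed.


Lemma ex_min (P : nat -> Prop) : (exists n, P n) -> exists n, P n /\ forall k, P k -> (n <= k)%N.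
Proof.
move=> [n hn]; elim: n {-2}n (leqnn n) hn => [|N IH] n hn hPn.
  move: hn; rewrite leqn0 => /eqP en; subst n.
  by exists 0%N; split.
case: (classic (exists k, (k < n)%N /\ P k)) => [[k [hk hPk]]|hno].
  apply: (IH k) => //; rewrite -ltnS; exact: leq_trans hk hn.
exists n; split => // k hPk; rewrite leqNgt; apply/negP => hk; apply: hno.
by exists k.
Qed.

Lemma min_entry (s : seq F) : has (fun x => x != 0) s ->
  exists m, m \in s /\ m != 0 /\ forall y, y \in s -> y != 0 -> v m <= v y.
Proof.
elim: s => [//|x s IH] /=.
case hs: (has (fun x => x != 0) s).
  move=> _; have [m [hm [m0 hmin]]] := IH hs.
  case: (boolP (x != 0)) => x0.
    case: (lerP (v x) (v m)) => hxm.
      exists x; split; first by rewrite inE eqxx.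
      split => // y; rewrite inE => /orP [/eqP ->|hy] y0 //.
      exact: le_trans hxm (hmin y hy y0).
    exists m; split; first by rewrite inE hm orbT.
    split => // y; rewrite inE => /orP [/eqP ->|hy] y0; last exact: hmin.
    exact: ltW.
  exists m; split; first by rewrite inE hm orbT.
  split => // y; rewrite inE => /orP [/eqP ->|hy] y0; last exact: hmin.
  by rewrite y0 in x0.
rewrite orbF => x0; exists x; split; first by rewrite inE eqxx.
split => // y; rewrite inE => /orP [/eqP ->|hy] y0 //.
exfalso; move/negbT: hs => /hasPn /(_ y hy); by rewrite y0.
Qed.

Lemma entry_div (m y : F) : m != 0 -> (y != 0 -> v m <= v y) -> in_o v (m^-1 * y).
Proof.
move=> m0 h; have [->|y0] := eqVneq y 0; first by rewrite mulr0; exact: o0.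
right; rewrite hmul ?invr_eq0 // vV //; have := h y0; lia.
Qed.

Lemma normal_sub (x y w : V) : det2 x y != 0 -> (forall z, span2 x y z -> O2 z) ->
  span2 x y w -> prim w -> exists n, span2 x y = Rv w n.
Proof.
move=> hd hO hw hpw.
have hwO := prim_O2 hpw.
have [f [hf hdf]] := completion hpw.
have e := @cramer x y f hd.
have [k0 hk0] := exists_pow_o (det2 f y / det2 x y).
have [k1 hk1] := exists_pow_o (det2 x f / det2 x y).
pose P := fun n : nat => exists be, in_o v be /\ be != 0 /\ span2 x y (be *: f) /\ v be = n%:Z.
have [n0 [[be0 [hbe0 [be00 [hbe0L vbe0]]]] hmin]] : exists n, P n /\ forall k, P k -> (n <= k)%N.
  apply: ex_min; exists (k0 + k1)%N; exists (p ^+ (k0 + k1)); split; first exact: opX.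
  split; first exact: pX_neq0.
  split; last exact: vX.
  rewrite e scalerDr !scalerA; apply: span2_comb; [| |exact: span2_x|exact: span2_y].
    by rewrite exprD [p ^+ k0 * _]mulrC -mulrA; apply: o_mul (opX _) hk0.
  by rewrite exprD -mulrA; apply: o_mul (opX _) hk1.
exists n0; rewrite (Rv_span n0 hwO hf hdf); apply: setE => z; split.
  move=> hz; have [al [be [hal [hbe ez]]]] := proj1 (basis hwO hf hdf z) (hO z hz).
  have hbL : span2 x y (be *: f).
    have -> : be *: f = z - al *: w by rewrite ez addrC addKr.
    by apply: span2_sub => //; apply: span2_scale.
  have [be0'|bn0] := eqVneq be 0.
    by exists al, 0; split => //; split; [exact: o0|rewrite ez be0' !scale0r].
  have hvb : (n0 <= absz (v be))%N.
    apply: hmin; exists be; do 3 split => //.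
    by case: hbe => [e0|hv]; [rewrite e0 eqxx in bn0|lia].
  have : dv n0 be by right; case: hbe => [e0|hv]; [rewrite e0 eqxx in bn0|lia].
  move/dvP => [be' [hbe' eb]].
  exists al, be'; split => //; split => //.
  by rewrite ez eb; apply: vec2P; rewrite !mxE; ring.
move=> [al [be [hal [hbe ->]]]]; apply: span2_comb => //.
have -> : p ^+ n0 *: f = (p ^+ n0 / be0) *: (be0 *: f) by rewrite scalerA divfK.
apply: span2_scale => //; apply: unit_o_o; apply: unit_o_div => //; first exact: pX_neq0.
by rewrite vX vbe0.
Qed.

Lemma normal_form L : is_lattice v L -> exists a n c, prim a /\ c != 0 /\ L = scale_lat c (Rv a n).
Proof.
move=> /latticeP [b0 [b1 [hd ->]]].
pose s := [:: b0 0 0; b0 1 0; b1 0 0; b1 1 0].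
have hs : has (fun x => x != 0) s.
  apply/negPn/negP => /hasPn h; move: hd; rewrite /det2.
  have := h (b0 0 0); have := h (b0 1 0); have := h (b1 0 0); have := h (b1 1 0).
  rewrite /s !inE !eqxx !orbT /= !negbK => /(_ isT)/eqP -> /(_ isT)/eqP -> /(_ isT)/eqP -> /(_ isT)/eqP ->.
  by rewrite !mulr0 subrr eqxx.
have [m [hm [m0 hmin]]] := min_entry hs.
have hmin' : forall y, y \in s -> in_o v (m^-1 * y).
  by move=> y hy; apply: entry_div => // y0; apply: hmin.
have hb0 : O2 (m^-1 *: b0) by split; rewrite mxE; apply: hmin'; rewrite !inE eqxx ?orbT.
have hb1 : O2 (m^-1 *: b1) by split; rewrite mxE; apply: hmin'; rewrite !inE eqxx ?orbT.
have mi0 : m^-1 != 0 by rewrite invr_eq0.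
have hd' : det2 (m^-1 *: b0) (m^-1 *: b1) != 0 by rewrite det2_scale mulf_neq0 // expf_neq0.
have hO : forall z, span2 (m^-1 *: b0) (m^-1 *: b1) z -> O2 z by move=> z; apply: O2_span.
have u1 : unit_o (m^-1 * m) by rewrite mulVf //; split; [exact: oner_neq0|exact: v1].
have [w [hw hpw]] : exists w, span2 (m^-1 *: b0) (m^-1 *: b1) w /\ prim w.
  move: hm; rewrite !inE => /or4P [] /eqP em.
  - exists (m^-1 *: b0); split; first exact: span2_x.
    by split => //; left; rewrite mxE -em.
  - exists (m^-1 *: b0); split; first exact: span2_x.
    by split => //; right; rewrite mxE -em.
  - exists (m^-1 *: b1); split; first exact: span2_y.
    by split => //; left; rewrite mxE -em.
  - exists (m^-1 *: b1); split; first exact: span2_y.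
    by split => //; right; rewrite mxE -em.
have [n en] := normal_sub hd' hO hw hpw.
exists w, n, m; split => //; split => //.
by rewrite -en -scale_span scaleM mulfV // scale1.
Qed.


Definition rep (a : V) (n : nat) (x : vertex v) := prim a /\ vpred x (Rv a n).

Lemma scale_inv c (L : V -> Prop) : c != 0 -> scale_lat c^-1 (scale_lat c L) = L.
Proof. by move=> c0; rewrite scaleM mulVf // scale1. Qed.

Lemma rep_exists x : exists a n, rep a n x.
Proof.
have [L hL] := vmem x.
have [a [n [c [ha [c0 eL]]]]] := normal_form (vmem_lattice hL).
exists a, n; split => //.
have -> : Rv a n = scale_lat c^-1 L by rewrite eL scale_inv.
by apply: vmem_scale => //; rewrite invr_eq0.
Qed.

Lemma step a n x y : rep a n x -> adj p x y ->
  (exists w, prim w /\ DV n (w - a) /\ rep w n.+1 y) \/ ((0 < n)%N /\ rep a n.-1 y).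
Proof.
move=> [ha hx] [L [L' [hL [hL' [s1 s2]]]]].
have := proj1 (@vmem_homot x (Rv a n) L hx) hL => /homotE [c [c0 eL]].
have ci0 : c^-1 != 0 by rewrite invr_eq0.
pose L'' := scale_lat c^-1 L'.
have hL'' : vpred y L'' by apply: vmem_scale.
have s1' : strict_sub (scale_lat p (Rv a n)) L''.
  have := strict_sub_scale ci0 s1; rewrite eL !scaleM.
  by rewrite [c^-1 * p]mulrC -mulrA mulVf // mulr1.
have s2' : strict_sub L'' (Rv a n).
  by have := strict_sub_scale ci0 s2; rewrite eL scale_inv.
case: (classify ha (vmem_lattice hL'') s1' s2') => [[w [hw [hd e]]]|[hn e]].
  by left; exists w; split => //; split => //; split => //; rewrite -e.
right; split => //; split => //.
have -> : Rv a n.-1 = scale_lat p^-1 L'' by rewrite e scale_inv.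
by apply: vmem_scale => //; rewrite invr_eq0.
Qed.

Definition outs (s s' : V * nat) := prim s'.1 /\ DV s.2 (s'.1 - s.1) /\ s'.2 = s.2.+1.
Definition inws (s s' : V * nat) := (0 < s.2)%N /\ s' = (s.1, s.2.-1).
Definition Good (r : nat -> vertex v) (i : nat) (s s' : V * nat) :=
  rep s'.1 s'.2 (r i.+1) /\
  (outs s s' \/ (inws s s' /\ ~ (exists s'', rep s''.1 s''.2 (r i.+1) /\ outs s s''))).

Definition inhV : inhabited (V * nat) := inhabits (0, 0%N).

Fixpoint sq (r : nat -> vertex v) (i : nat) : V * nat :=
  match i with
  | 0 => epsilon inhV (fun s => rep s.1 s.2 (r 0))
  | i'.+1 => epsilon inhV (Good r i' (sq r i'))
  end.

Lemma good_ex r i s : ray p r -> rep s.1 s.2 (r i) -> exists s', Good r i s s'.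
Proof.
move=> [_ hadj] hs.
case: (classic (exists s'', rep s''.1 s''.2 (r i.+1) /\ outs s s'')) => [[s'' [h1 h2]]|hno].
  by exists s''; split => //; left.
case: (step hs (hadj i)) => [[w [hw [hd hr]]]|[hn hr]].
  exfalso; apply: hno; exists (w, s.2.+1); split => //.
exists (s.1, s.2.-1); split => //; right; split => //.
Qed.

Lemma sq_rep r : ray p r -> forall i, rep (sq r i).1 (sq r i).2 (r i).
Proof.
move=> hr; elim => [|i IH] /=.
  apply: (epsilon_spec inhV (fun s => rep s.1 s.2 (r 0))).
  by have [a [n h]] := rep_exists (r 0); exists (a, n).
have := epsilon_spec inhV (Good r i (sq r i)) (good_ex hr IH).
by case.
Qed.

Lemma sq_good r : ray p r -> forall i, Good r i (sq r i) (sq r i.+1).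
Proof.
move=> hr i; exact: (epsilon_spec inhV (Good r i (sq r i)) (good_ex hr (sq_rep hr i))).
Qed.

Lemma limit_coord (hcomp : complete_valuation v) (c : nat -> F) (N0 : nat) :
  (forall k l, dv (N0 + k) (c (k + l)%N - c k)) -> exists l, forall k, dv (N0 + k) (l - c k).
Proof.
move=> hc.
have [l hl] : exists l : F, forall N : nat, exists M : nat, forall n, (M <= n)%N ->
        c n - l = 0 \/ (N%:Z <= v (c n - l)).
  apply: hcomp => N; exists N => m n hm hn.
  have -> : c m - c n = (c (N + (m - N))%N - c N) - (c (N + (n - N))%N - c N).
    by rewrite !subnKC //; ring.
  apply: (@dv_le N (N0 + N)); first exact: leq_addl.
  by apply: dv_sub; apply: hc.
exists l => k.
have [M hM] := hl (N0 + k)%N.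
pose n := maxn M k.
have -> : l - c k = (c (k + (n - k))%N - c k) - (c n - l).
  by rewrite subnKC ?leq_maxr //; ring.
apply: dv_sub; first exact: hc.
by apply: hM; rewrite leq_maxl.
Qed.


Lemma DV_c0 n (x y : V) : DV n (x - y) -> dv n (x 0 0 - y 0 0).
Proof. by case; rewrite !mxE. Qed.
Lemma DV_c1 n (x y : V) : DV n (x - y) -> dv n (x 1 0 - y 1 0).
Proof. by case; rewrite !mxE. Qed.

Lemma DV0v n : DV n (0 : V). Proof. by split; rewrite mxE; apply: dv0. Qed.

Lemma ray_end (hcomp : complete_valuation v) r : ray p r ->
  exists u, prim u /\ exists i0 N0, forall k, vpred (r (i0 + k)%N) (Rv u (N0 + k)).
Proof.
move=> hr.
have hrep := sq_rep hr; have hgood := sq_good hr.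
have persist : forall i, outs (sq r i) (sq r i.+1) -> outs (sq r i.+1) (sq r i.+2).
  move=> i [ho1 [ho2 ho3]]; case: (hgood i.+1) => hrep2 [//|[[hpos e] _]].
  exfalso; move: hrep2; rewrite e /= ho3 /= => -[_ h2].
  have h3 : vpred (r i.+2) (Rv (sq r i).1 (sq r i).2) by rewrite -(Rv_congr ho2).
  have := vsame h3 (hrep i).2 => /(proj1 hr).
  by move/eqP; rewrite -addn2 -{2}[i]addn0 eqn_add2l.
have [i0 hi0] : exists i0, outs (sq r i0) (sq r i0.+1).
  apply: NNPP => hno.
  have allin : forall i, inws (sq r i) (sq r i.+1).
    move=> i; case: (hgood i) => _ [ho|[hi _]] //.
    by exfalso; apply: hno; exists i.
  have hN : forall i, (sq r i).2 = ((sq r 0).2 - i)%N.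
    elim => [|i IH]; first by rewrite subn0.
    by have [_ ->] := allin i; rewrite /= IH subnS.
  by have [] := allin (sq r 0).2; rewrite hN subnn.
have allout : forall k, outs (sq r (i0 + k)) (sq r (i0 + k).+1).
  elim => [|k IH]; first by rewrite addn0.
  by rewrite addnS; apply: persist.
pose a k := (sq r (i0 + k)).1.
pose N0 := (sq r i0).2.
have hN : forall k, (sq r (i0 + k)).2 = (N0 + k)%N.
  elim => [|k IH]; first by rewrite !addn0.
  by rewrite addnS; have [_ [_ ->]] := allout k; rewrite IH addnS.
have step1 : forall k, DV (N0 + k) (a k.+1 - a k).
  by move=> k; have [_ [h _]] := allout k; rewrite /a addnS -hN.
have cauchy : forall k l, DV (N0 + k) (a (k + l)%N - a k).
  move=> k; elim => [|l IH]; first by rewrite addn0 subrr; apply: DV0v.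
  have -> : a (k + l.+1)%N - a k = (a (k + l).+1 - a (k + l)%N) + (a (k + l)%N - a k).
    by rewrite addnS addrA subrK.
  apply: DV_add => //; apply: (@DV_le _ (N0 + (k + l))); first by rewrite leq_add2l leq_addr.
  exact: step1.
have [l0 hl0] := @limit_coord hcomp (fun n => a n 0 0) N0
    (fun k l => DV_c0 (cauchy k l)).
have [l1 hl1] := @limit_coord hcomp (fun n => a n 1 0) N0
    (fun k l => DV_c1 (cauchy k l)).
pose u := mkv l0 l1.
have hu : forall k, DV (N0 + k) (u - a k).
  by move=> k; split; rewrite !mxE /=; [apply: hl0|apply: hl1].
have hpu : prim u.
  apply: (@prim_mod (a 1%N)); first by have [] := hrep (i0 + 1)%N.
  by apply: (@DV_le _ (N0 + 1)); [rewrite leq_addl|apply: hu].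
exists u; split => //; exists i0, N0 => k.
have [_ hk] := hrep (i0 + k)%N.
by rewrite (Rv_congr (hu k)) -hN.
Qed.


Lemma ray_actv M r : M \in unitmx -> ray p r -> ray p (actv M \o r).
Proof.
move=> hM [hi ha]; split; last by move=> i; apply: adj_actv.
move=> i j /= e; apply: hi.
by have := congr1 (actv (invmx M)) e; rewrite !actvK.
Qed.

Lemma lat1 : lat 1%:M = O2.
Proof.
apply: setE => w; split; first by move=> [c [/allO2 h ->]]; rewrite mul1mx.
by move=> h; exists w; split; [apply/allO2|rewrite mul1mx].
Qed.

Lemma map_prim u1 u2 : prim u1 -> prim u2 ->
  exists N : 'M[F]_2, N \in unitmx /\ forall n, image N (Rv u1 n) = Rv u2 n.
Proof.
move=> hp1 hp2.
have [f1 [hf1 hd1]] := completion hp1.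
have [f2 [hf2 hd2]] := completion hp2.
have hM1 : mat2 u1 f1 \in unitmx by rewrite unitmx2 det_mat2 unit_o_neq0.
have hM2 : mat2 u2 f2 \in unitmx by rewrite unitmx2 det_mat2 unit_o_neq0.
pose N := mat2 u2 f2 *m invmx (mat2 u1 f1).
have e0 : forall x y, mat2 x y *m mkv 1 0 = x.
  by move=> x y; rewrite mul2v col_mat2_0 col_mat2_1 mkv0 mkv1 scale1r scale0r addr0.
have e1 : forall x y, mat2 x y *m mkv 0 1 = y.
  by move=> x y; rewrite mul2v col_mat2_0 col_mat2_1 mkv0 mkv1 scale1r scale0r add0r.
have Nu : N *m u1 = u2.
  have := congr1 (mulmx (invmx (mat2 u1 f1))) (e0 u1 f1); rewrite mulKmx // => k.
  by rewrite /N -mulmxA -k e0.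
have Nf : N *m f1 = f2.
  have := congr1 (mulmx (invmx (mat2 u1 f1))) (e1 u1 f1); rewrite mulKmx // => k.
  by rewrite /N -mulmxA -k e1.
exists N; split; first by rewrite unitmx_mul hM2 unitmx_inv.
move=> n; rewrite (Rv_span n (prim_O2 hp1) hf1 hd1) (Rv_span n (prim_O2 hp2) hf2 hd2).
by rewrite image_span -scalemxAr Nu Nf.
Qed.

Lemma main_sec (hcomp : complete_valuation v) e (x0 : vertex v) r1 r2 :
  ray p r1 -> ray p r2 ->
  exists g : vertex v -> vertex v, [/\ in_Ghat p e g, g x0 = x0 & equiv_rays (g \o r1) r2].
Proof.
move=> h1 h2.
have [L0 hL0] := vmem x0.
have [B0 [hB0 eL0]] := proj1 (latticeB L0) (vmem_lattice hL0).
pose A := invmx B0.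
have hA : A \in unitmx by rewrite unitmx_inv.
have h1' := ray_actv hA h1.
have h2' := ray_actv hA h2.
have [u1 [hu1 [i1 [N1 e1]]]] := ray_end hcomp h1'.
have [u2 [hu2 [i2 [N2 e2]]]] := ray_end hcomp h2'.
have [N [hN eN]] := map_prim hu1 hu2.
have hAi : invmx A \in unitmx by rewrite unitmx_inv.
pose M := invmx A *m N *m A.
have hM : M \in unitmx by rewrite !unitmx_mul hAi hN hA.
have gE : forall x, actv M x = actv (invmx A) (actv N (actv A x)).
  by move=> x; rewrite !actv_comp // unitmx_mul hAi hN.
exists (actv M); split.
- exact: in_Ghat_actv.
- have hA0 : image A L0 = O2 by rewrite eL0 image_lat mulVmx // lat1.
  apply: (@vsame _ _ L0) => //.
  have -> : L0 = image M L0.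
    rewrite /M !image_comp hA0 -(Rv0 hu1) eN (Rv0 hu2) -hA0 -image_comp mulVmx //.
    by rewrite image1.
  exact: actv_mem.
- exists (i1 + N2)%N, (i2 + N1)%N => i /=.
  rewrite gE -addnA.
  have -> : r2 (i2 + N1 + i)%N = actv (invmx A) (actv A (r2 (i2 + (N1 + i))%N)).
    by rewrite actvK // addnA.
  congr (actv (invmx A) _).
  apply: (@vsame _ _ (Rv u2 (N1 + (N2 + i)))).
    rewrite -eN; apply: actv_mem => //; exact: (e1 (N2 + i)%N).
  by rewrite (addnCA N1 N2 i); exact: (e2 (N1 + i)%N).
Qed.

End Main.

Theorem mainTheorem8 (F : fieldType) (v : F -> int) (p : F)
  (hF : is_nonarch_local_field v) (hp0 : p != 0) (hp : v p = 1)
  (e : nat) (he : (1 <= e)%N) (x0 : vertex v)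
  (r1 r2 : nat -> vertex v) (h1 : ray p r1) (h2 : ray p r2) :
  exists g : vertex v -> vertex v,
    [/\ in_Ghat p e g, g x0 = x0 & equiv_rays (g \o r1) r2].
Proof.
case: hF => [[hmul hadd _] _ hcomp].
exact: (@main_sec F v p hmul hadd hp0 hp hcomp e x0 r1 r2 h1 h2).
Qed.
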